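(* Let $\mathbf{k}$ be a field, $p\ge3$ an integer, $S=\mathbf{k}[e_1,\dots,e_{2p}]$, and let $\mathcal{F}$ be the total complex defined below. Then $H_i(\mathcal{F})=0$ for all $i\neq0$.
   Context: Let $V=\operatorname{span}_{\mathbf{k}}(e_1,\dots,e_{p-1})$ and $W=\operatorname{span}_{\mathbf{k}}(e_{p+1},\dots,e_{2p-1})$ inside $S_1$. For $U\in\{V,W\}$, the Koszul differential $\partial^U:S\otimes_{\mathbf{k}}\bigwedge^kU\to S\otimes_{\mathbf{k}}\bigwedge^{k-1}U$ is $s\otimes u_1\wedge\cdots\wedge u_k\mapsto\sum_{l=1}^k(-1)^lsu_l\otimes u_1\wedge\cdots\widehat{u_l}\cdots\wedge u_k$. For $a,b\ge0$ let $C_{a,b}=S\otimes\bigwedge^{a+2}V\otimes\bigwedge^bW$, with horizontal maps $\partial^h=\partial^V\otimes1:C_{a,b}\to C_{a-1,b}$ (zero for $a=0$) and vertical maps $\partial^v:C_{a,b}\to C_{a,b-1}$, $s\otimes\omega\otimes w_1\wedge\cdots\wedge w_b\mapsto(-1)^a\sum_{l=1}^b(-1)^lsw_l\otimes\omega\otimes w_1\wedge\cdots\widehat{w_l}\cdots\wedge w_b$. $\mathcal{F}$ is the total complex: $\mathcal{F}_n=\bigoplus_{a+b=n}C_{a,b}$ with differential $\partial^h+\partial^v$. *)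

(* Defs.v *)
From HB Require Import structures.
From mathcomp Require Import all_boot all_order all_algebra.
From mathcomp Require Import zify.
From mathcomp Require Export mpoly.
Set Implicit Arguments. Unset Strict Implicit. Unset Printing Implicit Defensive.
Import Order.TTheory GRing.Theory.
Local Open Scope ring_scope.

(* Variables e_1,...,e_{2p} of S are 'X_0,...,'X_(2p-1); e_j = 'X_(j-1). *)
(* V has basis e_1..e_{p-1}: basis vector i : 'I_(p-1) is e_{i+1} = 'X_i.  *)
(* W has basis e_{p+1}..e_{2p-1}: basis vector j : 'I_(p-1) is e_{p+1+j} = 'X_(p+j). *)

Lemma vidx_lt (p : nat) (i : 'I_(p.-1)) : (i < 2 * p)%N.
Proof. have := ltn_ord i; lia. Qed.

Lemma widx_lt (p : nat) (j : 'I_(p.-1)) : (p + j < 2 * p)%N.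
Proof. have := ltn_ord j; lia. Qed.

Section Complex.
Variables (k : fieldType) (p : nat).

Definition S := {mpoly k[2 * p]}.
Definition Idx := 'I_(p.-1).
(* basis index of S (x) /\^A V (x) /\^B W : the pair (A, B) of index sets,
   standing for  e_A (x) e_B  with wedge factors in increasing order. *)
Definition key := ({set Idx} * {set Idx})%type.
(* elements of the free S-module  (+)_{A,B} S (x) /\^{|A|} V (x) /\^{|B|} W *)
Definition chain := {ffun key -> S}.

Definition Xv (i : Idx) : S := 'X_(Ordinal (vidx_lt i)).
Definition Xw (j : Idx) : S := 'X_(Ordinal (widx_lt j)).

(* (-1)^l where l is the (1-based) position of i in the increasing list of A *)
Definition possign (i : Idx) (A : {set Idx}) : S :=
  (-1) ^+ #|[set m in A | (m <= i)%N]|.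

Definition single (K : key) (s : S) : chain :=
  [ffun K' => if K' == K then s else 0].

(* horizontal map on s (x) e_A (x) e_B in C_{a,b}, a = |A|-2; zero for a = 0 *)
Definition dh (A B : {set Idx}) (s : S) : chain :=
  if (2 < #|A|)%N then
    \sum_(i in A) single (A :\ i, B) (possign i A * (s * Xv i))
  else 0.

(* vertical map on s (x) e_A (x) e_B in C_{a,b}, a = |A|-2 *)
Definition dv (A B : {set Idx}) (s : S) : chain :=
  (-1) ^+ (#|A| - 2) *:
    \sum_(j in B) single (A, B :\ j) (possign j B * (s * Xw j)).

Definition dF (x : chain) : chain :=
  \sum_(K : key) (dh K.1 K.2 (x K) + dv K.1 K.2 (x K)).

(* x lies in F_n = (+)_{a+b=n, a,b>=0} C_{a,b},  C_{a,b} = S (x) /\^{a+2}V (x) /\^b W *)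
Definition inF (n : int) (x : chain) : Prop :=
  forall K : key, x K != 0 ->
    (2 <= #|K.1|)%N /\ ((#|K.1| + #|K.2|)%N%:Z = n + 2)%R.

End Complex.

(* Main.v *)
Require Import Defs.
From HB Require Import structures.
From mathcomp Require Import all_boot all_order all_algebra.
From mathcomp Require Import mpoly ssrcomplements zify.
Set Implicit Arguments. Unset Strict Implicit. Unset Printing Implicit Defensive.
Import Order.TTheory GRing.Theory.
Local Open Scope ring_scope.

Section Work.
Variables (k : fieldType) (p : nat).
Local Notation S := (S k p).
Local Notation chain := (chain k p).
Local Notation key := (key p).
Local Notation Idx := (Idx p).
Local Notation mon := (multinom (2 * p)).

Definition ext (f : mon -> chain) (s : S) : chain :=
  \sum_(m <- msupp s) s@_m *: f m.

Lemma extwE f b (s : S) : (msize s <= b)%N ->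
  ext f s = \sum_(m : bmultinom (2 * p) b) s@_m *: f m.
Proof.
move=> lt_pk; pose I : subFinType _ := bmultinom (2 * p) b.
rewrite /ext (big_mksub I) //=; first last.
  by move=> x /msize_mdeg_lt /leq_trans; apply.
  by rewrite msupp_uniq.
by rewrite big_rmcond //= => i; move/memN_msupp_eq0 ->; rewrite scale0r.
Qed.

Lemma extD f (s t : S) : ext f (s + t) = ext f s + ext f t.
Proof.
set b := (msize s + msize t + msize (s + t))%N.
rewrite !(@extwE _ b) ?/b; try lia.
rewrite -big_split /=; apply: eq_bigr => m _; by rewrite mcoeffD scalerDl.
Qed.

Lemma extZ f c (s : S) : ext f (c *: s) = c *: ext f s.
Proof.
set b := (msize s + msize (c *: s))%N.
rewrite !(@extwE _ b) ?/b; try lia.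
rewrite scaler_sumr; apply: eq_bigr => m _; by rewrite mcoeffZ scalerA.
Qed.

Lemma ext0 f : ext f 0 = 0.
Proof. by apply/eqP; rewrite -[X in _ == X](subrr (ext f 0)) -{2}(addr0 0) extD addrK. Qed.

Lemma extX f m : ext f 'X_[m] = f m.
Proof. by rewrite /ext msuppX big_seq1 mcoeffX eqxx scale1r. Qed.

Lemma single_ffunE K s K' : single K s K' = if K' == K then s else 0 :> S.
Proof. by rewrite ffunE. Qed.

Lemma singleD K (s t : S) : single K (s + t) = single K s + single K t.
Proof. apply/ffunP => K'; rewrite !ffunE; case: eqP => _ //; by rewrite addr0. Qed.

Lemma single0 K : single K (0 : S) = 0.
Proof. apply/ffunP => K'; rewrite !ffunE; by case: eqP. Qed.

Lemma singleZ K c (s : S) : single K (c *: s) = c *: single K s.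
Proof. apply/ffunP => K'; rewrite !ffunE; case: eqP => _ //; by rewrite scaler0. Qed.

Lemma singleN K (s : S) : single K (- s) = - single K s.
Proof. apply/ffunP => K'; rewrite !ffunE; case: eqP => _ //; by rewrite oppr0. Qed.

Lemma single_sum K I (r : seq I) P (F : I -> S) :
  single K (\sum_(i <- r | P i) F i) = \sum_(i <- r | P i) single K (F i).
Proof. exact: (big_morph _ (singleD K) (single0 K)). Qed.

Lemma chain_decomp (x : chain) : x = \sum_(K : key) single K (x K).
Proof.
apply/ffunP => K; rewrite sum_ffunE (bigD1 K) //= big1 => [|K' nK].
  by rewrite ffunE eqxx addr0.
by rewrite ffunE eq_sym (negbTE nK).
Qed.

Lemma signM n (s : S) : (-1) ^+ n * s = ((-1) ^+ n : k) *: s.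
Proof.
elim: n => [|n IH]; first by rewrite !expr0 mul1r scale1r.
by rewrite !exprS mulN1r mulNr IH mulN1r scaleNr.
Qed.


Definition vi (i : Idx) : 'I_(2 * p) := Ordinal (vidx_lt i).
Definition wi (j : Idx) : 'I_(2 * p) := Ordinal (widx_lt j).

Lemma vi_wi i j : (vi i == wi j) = false.
Proof. apply/negbTE; apply/eqP => /(congr1 val) /=; have := ltn_ord i; lia. Qed.

Lemma wi_wi j j' : (wi j == wi j') = (j == j').
Proof. apply/eqP/eqP => [/(congr1 val) /= h|-> //]; apply/val_inj => /=; lia. Qed.

Lemma vi_vi j j' : (vi j == vi j') = (j == j').
Proof. apply/eqP/eqP => [/(congr1 val) /= h|-> //]; by apply/val_inj. Qed.

Definition minP (P : pred Idx) : option Idx :=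
  [pick j | P j && [forall j', P j' ==> (j <= j')%N]].

Lemma minP_some (P : pred Idx) j : P j -> (forall j', P j' -> (j <= j')%N) -> minP P = Some j.
Proof.
move=> Pj Mj; rewrite /minP; case: pickP => [j1 /andP[P1 /forallP M1]|/(_ j)].
  congr Some; apply/val_inj/eqP; rewrite eqn_leq; apply/andP; split.
    by have := M1 j; rewrite Pj.
  exact: Mj.
by rewrite Pj /=; move/negP; case; apply/forallP => j'; apply/implyP; exact: Mj.
Qed.

Lemma minP_none (P : pred Idx) : (forall j, ~~ P j) -> minP P = None.
Proof. move=> H; rewrite /minP; case: pickP => // j /andP[Pj _]; by have := H j; rewrite Pj. Qed.

Lemma minP_ex (P : pred Idx) j1 : P j1 -> exists j, P j /\ forall j', P j' -> (j <= j')%N.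
Proof. move=> P1; case: (arg_minnP (fun j : Idx => nat_of_ord j) P1) => j Pj Hj; by exists j. Qed.

Definition Wact (K : key) (m : mon) (j : Idx) : bool := (j \in K.2) || (0 < m (wi j))%N.
Definition Vact (K : key) (m : mon) (i : Idx) : bool := (i \in K.1) || (0 < m (vi i))%N.

Definition sW (A : {set Idx}) : k := - (-1) ^+ #|A|.

Definition Hb (K : key) (m : mon) : chain :=
  match minP (Wact K m) with
  | Some j => if j \in K.2 then 0 else single (K.1, j |: K.2) (sW K.1 *: 'X_[(m - U_(wi j))%MM])
  | None => match minP (Vact K m) with
    | Some i => if i \in K.1 then 0 else single (i |: K.1, K.2) ((-1 : k) *: 'X_[(m - U_(vi i))%MM])
    | None => 0 end end.

Definition Hs (K : key) (s : S) : chain := ext (Hb K) s.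
Definition H (x : chain) : chain := \sum_(K : key) Hs K (x K).

Definition dhF (A B : {set Idx}) (s : S) : chain :=
  \sum_(i in A) single (A :\ i, B) (possign k i A * (s * Xv k i)).
Definition D (x : chain) : chain := \sum_(K : key) (dhF K.1 K.2 (x K) + dv K.1 K.2 (x K)).

Definition piK (x : chain) : chain := [ffun K : key => if (2 <= #|K.1|)%N then x K else 0].

Lemma dhF0 A B : dhF A B 0 = 0.
Proof. by rewrite /dhF big1 // => i _; rewrite mul0r mulr0 single0. Qed.
Lemma dv0 A B : dv A B (0 : S) = 0.
Proof. by rewrite /dv big1 ?scaler0 // => i _; rewrite mul0r mulr0 single0. Qed.
Lemma dh0 A B : dh A B (0 : S) = 0.
Proof. by rewrite /dh; case: ifP => // _; rewrite big1 // => i _; rewrite mul0r mulr0 single0. Qed.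

Lemma dhFD A B s t : dhF A B (s + t) = dhF A B s + dhF A B t.
Proof. by rewrite /dhF -big_split; apply: eq_bigr => i _; rewrite mulrDl mulrDr singleD. Qed.
Lemma dvD A B (s t : S) : dv A B (s + t) = dv A B s + dv A B t.
Proof. by rewrite /dv -scalerDr -big_split; apply: f_equal; apply: eq_bigr => i _; rewrite mulrDl mulrDr singleD. Qed.
Lemma dhFZ A B c s : dhF A B (c *: s) = c *: dhF A B s.
Proof. by rewrite /dhF scaler_sumr; apply: eq_bigr => i _; rewrite -scalerAl -scalerAr singleZ. Qed.
Lemma dvZ A B c (s : S) : dv A B (c *: s) = c *: dv A B s.
Proof.
rewrite /dv [in RHS]scalerA mulrC -scalerA [in RHS]scaler_sumr; apply: f_equal.
by apply: eq_bigr => i _; rewrite -scalerAl -scalerAr singleZ.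
Qed.

Lemma D_single K s : D (single K s) = dhF K.1 K.2 s + dv K.1 K.2 s.
Proof.
rewrite /D (bigD1 K) //= big1 => [|K' nK]; first by rewrite ffunE eqxx addr0.
by rewrite ffunE (negbTE nK) dhF0 dv0 addr0.
Qed.

Lemma DD x y : D (x + y) = D x + D y.
Proof. by rewrite /D -big_split; apply: eq_bigr => K _; rewrite ffunE dhFD dvD addrACA. Qed.
Lemma DZ c x : D (c *: x) = c *: D x.
Proof. by rewrite /D scaler_sumr; apply: eq_bigr => K _; rewrite ffunE dhFZ dvZ scalerDr. Qed.
Lemma D0 : D 0 = 0.
Proof. by have := DZ 0 0; rewrite !scale0r. Qed.

Lemma HD x y : H (x + y) = H x + H y.
Proof. by rewrite /H -big_split; apply: eq_bigr => K _; rewrite ffunE /Hs extD. Qed.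
Lemma HZ c x : H (c *: x) = c *: H x.
Proof. by rewrite /H scaler_sumr; apply: eq_bigr => K _; rewrite ffunE /Hs extZ. Qed.
Lemma H0 : H 0 = 0.
Proof. by have := HZ 0 0; rewrite !scale0r. Qed.

Lemma H_single K s : H (single K s) = Hs K s.
Proof.
rewrite /H (bigD1 K) //= big1 => [|K' nK]; first by rewrite ffunE eqxx addr0.
by rewrite ffunE (negbTE nK) /Hs ext0.
Qed.

Lemma H_sum I (r : seq I) P (F : I -> chain) :
  H (\sum_(i <- r | P i) F i) = \sum_(i <- r | P i) H (F i).
Proof. exact: (big_morph _ HD H0). Qed.
Lemma D_sum I (r : seq I) P (F : I -> chain) :
  D (\sum_(i <- r | P i) F i) = \sum_(i <- r | P i) D (F i).
Proof. exact: (big_morph _ DD D0). Qed.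

End Work.



Lemma mnm_swap n (m : 'X_{1..n}) a b : (0 < m a)%N ->
  (m - U_(a) + U_(b) = m + U_(b) - U_(a))%MM.
Proof.
move=> h; apply/mnmP => t; rewrite !(mnmDE, mnmBE, mnm1E).
by case: (eqVneq a t) => [<-|_]; case: (eqVneq b t) => _ /=; lia.
Qed.

Lemma mnm_subK n (m : 'X_{1..n}) a : (0 < m a)%N -> (m - U_(a) + U_(a) = m)%MM.
Proof.
move=> h; apply/mnmP => t; rewrite !(mnmDE, mnmBE, mnm1E).
by case: (eqVneq a t) => [<-|_] /=; lia.
Qed.

Section Work2.
Variables (k : fieldType) (p : nat).
Local Notation S := (S k p).
Local Notation chain := (chain k p).
Local Notation key := (key p).
Local Notation Idx := (Idx p).
Local Notation mon := (multinom (2 * p)).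
Local Notation sW := (@sW k p).
Local Notation Hb := (@Hb k p).
Local Notation Hs := (@Hs k p).
Local Notation vi := (@vi p).
Local Notation wi := (@wi p).

Definition kposs (i : Idx) (A : {set Idx}) : k := (-1) ^+ #|[set m in A | (m <= i)%N]|.

Lemma possignM i A (t : S) : possign k i A * t = kposs i A *: t.
Proof. by rewrite /possign signM. Qed.

Lemma XvE (i : Idx) : Xv k i = 'X_[U_(vi i)]. Proof. by []. Qed.
Lemma XwE (i : Idx) : Xw k i = 'X_[U_(wi i)]. Proof. by []. Qed.

Lemma normX i A (m : mon) (c : k) idx :
  possign k i A * ((c *: 'X_[m]) * 'X_[U_(idx)]) = (kposs i A * c) *: 'X_[(m + U_(idx))%MM].
Proof. by rewrite -scalerAl -mpolyXD possignM scalerA. Qed.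

Lemma normX1 i A (m : mon) idx :
  possign k i A * ('X_[m] * 'X_[U_(idx)]) = kposs i A *: 'X_[(m + U_(idx))%MM].
Proof. by rewrite -mpolyXD possignM. Qed.

Lemma kposs_min (j : Idx) (B : {set Idx}) : j \in B -> (forall l, l \in B -> (j <= l)%N) -> kposs j B = -1.
Proof.
move=> jB hm; rewrite /kposs (_ : [set m in B | (m <= j)%N] = [set j]) ?cards1 ?expr1 //.
apply/setP => l; rewrite !inE; apply/andP/eqP => [[lB lj]|->]; last by rewrite jB leqnn.
by apply/val_inj/eqP; rewrite eqn_leq lj hm.
Qed.

Lemma kposs_U1 (j l : Idx) (B : {set Idx}) : j \notin B -> (j < l)%N -> kposs l (j |: B) = - kposs l B.
Proof.
move=> jB jl; rewrite /kposs (_ : [set m in j |: B | (m <= l)%N] = j |: [set m in B | (m <= l)%N]).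
  by rewrite cardsU1 inE (negbTE jB) /= exprS mulN1r.
apply/setP => t; rewrite !inE; case: (eqVneq t j) => [->|] //=; by rewrite ltnW.
Qed.

Lemma minP_eq (P Q : pred Idx) : P =1 Q -> minP P = minP Q.
Proof.
move=> e; rewrite /minP; apply: eq_pick => j /=; rewrite e; congr andb.
by apply: eq_forallb => j'; rewrite e.
Qed.

Lemma sW_D1 (A : {set Idx}) (i : Idx) : i \in A -> sW (A :\ i) = - sW A.
Proof. by move=> iA; rewrite /sW (cardsD1 i A) iA add1n exprS mulN1r opprK. Qed.


Lemma setU1D1 (j l : Idx) (B : {set Idx}) : j != l -> (j |: B) :\ l = j |: (B :\ l).
Proof. move=> jl; apply/setP => t; rewrite !inE; case: (eqVneq t j) => [->|] //=; by rewrite jl. Qed.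

Lemma Wact_V (A A' B : {set Idx}) (m : mon) i : Wact (A', B) (m + U_(vi i))%MM =1 Wact (A, B) m.
Proof. by move=> j; rewrite /Wact /= mnmDE mnm1E vi_wi addn0. Qed.

Lemma Wact_W (A B : {set Idx}) (m : mon) l : l \in B ->
  Wact (A, B :\ l) (m + U_(wi l))%MM =1 Wact (A, B) m.
Proof.
move=> lB j; rewrite /Wact /= in_setD1 mnmDE mnm1E wi_wi.
by case: (eqVneq l j) => [<-|nlj] /=; rewrite ?lB ?addn1 ?addn0.
Qed.

Lemma Vact_V (A B B' : {set Idx}) (m : mon) i : i \in A ->
  Vact (A :\ i, B') (m + U_(vi i))%MM =1 Vact (A, B) m.
Proof.
move=> iA j; rewrite /Vact /= in_setD1 mnmDE mnm1E vi_vi.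
by case: (eqVneq i j) => [<-|nlj] /=; rewrite ?iA ?addn1 ?addn0.
Qed.

Lemma H_dhF A B (m : mon) :
  H (dhF A B 'X_[m]) = \sum_(i in A) kposs i A *: Hb (A :\ i, B) (m + U_(vi i))%MM.
Proof. by rewrite /dhF H_sum; apply: eq_bigr => i _; rewrite H_single XvE normX1 /Hs extZ extX. Qed.

Lemma H_dv A B (m : mon) :
  H (dv A B 'X_[m]) = (-1) ^+ (#|A| - 2) *: \sum_(l in B) kposs l B *: Hb (A, B :\ l) (m + U_(wi l))%MM.
Proof.
rewrite /dv HZ H_sum; apply: f_equal; apply: eq_bigr => i _.
by rewrite H_single XwE normX1 /Hs extZ extX.
Qed.

Lemma dhF_X A B c (m : mon) : dhF A B (c *: 'X_[m]) =
  \sum_(i in A) single (A :\ i, B) ((kposs i A * c) *: 'X_[(m + U_(vi i))%MM]).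
Proof. by apply: eq_bigr => i _; rewrite XvE normX. Qed.

Lemma dv_X A B c (m : mon) : dv A B (c *: 'X_[m]) = (-1) ^+ (#|A| - 2) *:
  \sum_(l in B) single (A, B :\ l) ((kposs l B * c) *: 'X_[(m + U_(wi l))%MM]).
Proof. by rewrite /dv; apply: f_equal; apply: eq_bigr => i _; rewrite XwE normX. Qed.

End Work2.



Section Work3.
Variables (k : fieldType) (p : nat).
Local Notation S := (S k p).
Local Notation chain := (chain k p).
Local Notation key := (key p).
Local Notation Idx := (Idx p).
Local Notation mon := (multinom (2 * p)).
Local Notation sW := (@sW k p).
Local Notation Hb := (@Hb k p).
Local Notation Hs := (@Hs k p).
Local Notation vi := (@vi p).
Local Notation wi := (@wi p).
Local Notation kposs := (@kposs k p).

Lemma sgn_sq n : ((-1) ^+ n * (-1) ^+ n : k) = 1.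
Proof. by rewrite -exprD addnn -mul2n exprM expr2 mulN1r opprK expr1n. Qed.

Lemma core (A B : {set Idx}) (m : mon) : (2 <= #|A|)%N ->
  D (Hb (A, B) m) + H (D (single (A, B) 'X_[m])) = single (A, B) 'X_[m].
Proof.
move=> hA.
have hs : ((-1) ^+ (#|A| - 2) : k) = (-1) ^+ #|A|.
  by rewrite -[in RHS](subnK hA) exprD expr2 mulN1r opprK mulr1.
rewrite D_single /= HD H_dhF H_dv hs.
case: (boolP [exists j, Wact (A, B) m j]) => [/existsP [j1 P1]|noW].
  have [j0 [P0 M0]] := minP_ex P1.
  have hmin : minP (Wact (A, B) m) = Some j0 := minP_some P0 M0.
  have hV : forall i, Hb (A :\ i, B) (m + U_(vi i))%MM = if j0 \in B then 0 else
      single (A :\ i, j0 |: B) (sW (A :\ i) *: 'X_[(m + U_(vi i) - U_(wi j0))%MM]).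
    by move=> i; rewrite /Hb (minP_eq (Wact_V A _ _ _ _)) hmin.
  have hW : forall l, l \in B -> Hb (A, B :\ l) (m + U_(wi l))%MM =
      if j0 \in B :\ l then 0 else
      single (A, j0 |: (B :\ l)) (sW A *: 'X_[(m + U_(wi l) - U_(wi j0))%MM]).
    by move=> l lB; rewrite /Hb (minP_eq (Wact_W A m lB)) hmin.
  case j0B: (j0 \in B).
    have -> : Hb (A, B) m = 0 by rewrite /Hb hmin /= j0B.
    rewrite D0 add0r big1 ?add0r => [|i _]; last by rewrite hV j0B scaler0.
    rewrite (bigD1 j0) //= big1 ?addr0 => [|l /andP[lB lj0]]; last first.
      by rewrite hW // in_setD1 eq_sym lj0 j0B scaler0.
    rewrite hW // setD11 /= setD1K // addmK -!singleZ !scalerA.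
    have -> : kposs j0 B = -1.
      by apply: kposs_min => // l lB; apply: M0; rewrite /Wact lB.
    by rewrite /sW mulrN1 mulrNN sgn_sq scale1r.
  have hm0 : (0 < m (wi j0))%N by move: P0; rewrite /Wact /= j0B.
  have -> : Hb (A, B) m = single (A, j0 |: B) (sW A *: 'X_[(m - U_(wi j0))%MM]).
    by rewrite /Hb hmin /= j0B.
  rewrite D_single /= dhF_X dv_X hs addrACA.
  have -> : forall x : chain, \sum_(i in A) single (A :\ i, j0 |: B)
      ((kposs i A * sW A) *: 'X_[(m - U_(wi j0) + U_(vi i))%MM]) +
      \sum_(i in A) kposs i A *: Hb (A :\ i, B) (m + U_(vi i))%MM + x = x.
    move=> x; rewrite -big_split big1 ?add0r // => i iA.
    rewrite /= hV j0B -singleZ -singleD scalerA mnm_swap // -scalerDl sW_D1 //.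
    by rewrite -mulrDr subrr mulr0 scale0r single0.
  rewrite -scalerDr (big_setU1 _ (negbT j0B)) /= -addrA -big_split big1 ?addr0 => [|l lB]; last first.
    have lj0 : j0 != l by apply/eqP => e; move: j0B; rewrite e lB.
    have lt0 : (j0 < l)%N by rewrite ltn_neqAle lj0 M0 // /Wact lB.
    rewrite hW // in_setD1 j0B andbF setU1D1 // kposs_U1 ?j0B //.
    rewrite /= mnm_swap // -singleZ -singleD scalerA -scalerDl.
    by rewrite mulNr addNr scale0r single0.
  rewrite setU1K ?j0B // mnm_subK //.
  have -> : kposs j0 (j0 |: B) = -1.
    apply: kposs_min; first by rewrite setU11.
    move=> l; rewrite in_setU1 => /orP[/eqP -> //|lB]; apply: M0; by rewrite /Wact lB.
  by rewrite -singleZ scalerA /sW mulN1r opprK sgn_sq scale1r.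
have nW : forall j, ~~ Wact (A, B) m j.
  by move=> j; apply/negP => Pj; move/negP: noW; apply; apply/existsP; exists j.
have B0 : B = set0.
  by apply/setP => j; rewrite inE; have := nW j; rewrite /Wact /=; case: (j \in B).
subst B.
have hWn : minP (Wact (A, set0) m) = None := minP_none nW.
have [i1 i1A] : exists i1, i1 \in A by apply/set0Pn; rewrite -card_gt0; lia.
have P1 : Vact (A, set0) m i1 by rewrite /Vact i1A.
have [i0 [P0 M0]] := minP_ex P1.
have hmin : minP (Vact (A, set0) m) = Some i0 := minP_some P0 M0.
have hV : forall i, i \in A -> Hb (A :\ i, set0) (m + U_(vi i))%MM =
    if i0 \in A :\ i then 0 else
    single (i0 |: (A :\ i), set0) ((-1 : k) *: 'X_[(m + U_(vi i) - U_(vi i0))%MM]).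
  by move=> i iA; rewrite /Hb (minP_eq (Wact_V A _ _ _ _)) hWn (minP_eq (Vact_V set0 _ _ iA)) hmin.
rewrite big_set0 scaler0 addr0.
case i0A: (i0 \in A).
  have -> : Hb (A, set0) m = 0 by rewrite /Hb hWn hmin /= i0A.
  rewrite D0 add0r (bigD1 i0) //= big1 ?addr0 => [|i /andP[iA ii0]]; last first.
    by rewrite hV // in_setD1 eq_sym ii0 i0A scaler0.
  rewrite hV // setD11 /= setD1K // addmK -singleZ scalerA.
  have -> : kposs i0 A = -1.
    by apply: kposs_min => // l lA; apply: M0; rewrite /Vact lA.
  by rewrite mulN1r opprK scale1r.
have hm0 : (0 < m (vi i0))%N by move: P0; rewrite /Vact /= i0A.
have -> : Hb (A, set0) m = single (i0 |: A, set0) ((-1 : k) *: 'X_[(m - U_(vi i0))%MM]).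
  by rewrite /Hb hWn hmin /= i0A.
rewrite D_single /= dhF_X dv_X big_set0 scaler0 addr0 (big_setU1 _ (negbT i0A)) /=.
rewrite -addrA -big_split big1 ?addr0 => [|i iA]; last first.
  have ii0 : i0 != i by apply/eqP => e; move: i0A; rewrite e iA.
  have lt0 : (i0 < i)%N by rewrite ltn_neqAle ii0 M0 // /Vact iA.
  rewrite hV // in_setD1 i0A andbF setU1D1 // kposs_U1 ?i0A //.
  rewrite /= mnm_swap // -singleZ -singleD scalerA -scalerDl.
  by rewrite mulNr addNr scale0r single0.
rewrite setU1K ?i0A // mnm_subK //.
have -> : kposs i0 (i0 |: A) = -1.
  apply: kposs_min; first by rewrite setU11.
  move=> l; rewrite in_setU1 => /orP[/eqP -> //|lA]; apply: M0; by rewrite /Vact lA.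
by rewrite mulN1r opprK scale1r.
Qed.

End Work3.



Section Work4.
Variables (k : fieldType) (p : nat).
Local Notation S := (S k p).
Local Notation chain := (chain k p).
Local Notation key := (key p).
Local Notation Idx := (Idx p).
Local Notation mon := (multinom (2 * p)).
Local Notation sW := (@sW k p).
Local Notation Hb := (@Hb k p).
Local Notation Hs := (@Hs k p).
Local Notation vi := (@vi p).
Local Notation wi := (@wi p).
Local Notation kposs := (@kposs k p).
Local Notation piF := (@piK k p).

Definition supp (Q : pred key) (z : chain) := forall K, z K != 0 -> Q K.

Lemma supp0 Q : supp Q 0.
Proof. by move=> K; rewrite ffunE eqxx. Qed.

Lemma suppD Q a b : supp Q a -> supp Q b -> supp Q (a + b).
Proof.
move=> ha hb K; rewrite ffunE; case: (eqVneq (a K) 0) => [->|/ha //].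
by rewrite add0r => /hb.
Qed.

Lemma suppZ Q c a : supp Q a -> supp Q (c *: a).
Proof. by move=> ha K; rewrite ffunE; case: (eqVneq (a K) 0) => [->|/ha //]; rewrite scaler0 eqxx. Qed.

Lemma supp_sum Q I (r : seq I) (P : pred I) (F : I -> chain) :
  (forall i, P i -> supp Q (F i)) -> supp Q (\sum_(i <- r | P i) F i).
Proof. move=> h; apply: (big_ind (supp Q)) => //; [exact: supp0 | exact: suppD]. Qed.

Lemma supp_single (Q : pred key) K s : Q K -> supp Q (single K s).
Proof. by move=> hK K'; rewrite ffunE; case: (eqVneq K' K) => [->|_] //; rewrite eqxx. Qed.

Lemma supp_ext Q f s : (forall m, supp Q (f m)) -> supp Q (ext f s).
Proof. by move=> h; apply: supp_sum => m _; apply: suppZ. Qed.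

Lemma supp_impl (Q Q' : pred key) z : supp Q z -> (forall K, Q K -> Q' K) -> supp Q' z.
Proof. by move=> h h' K /h /h'. Qed.

Lemma pi_id z : supp (fun K : key => 2 <= #|K.1|)%N z -> piF z = z.
Proof. move=> h; apply/ffunP => K; rewrite ffunE; case: ifP => // h2; apply/esym/eqP; exact: (contraFT (@h K) h2). Qed.

Lemma pi_0 z : supp (fun K : key => #|K.1| < 2)%N z -> piF z = 0.
Proof.
move=> h; apply/ffunP => K; rewrite !ffunE; case: ifP => // h2; apply/eqP.
by apply: contraLR h2 => /h; rewrite ltnNge.
Qed.

Lemma piD a b : piF (a + b) = piF a + piF b.
Proof. by apply/ffunP => K; rewrite !ffunE; case: ifP; rewrite ?addr0. Qed.
Lemma piB a b : piF (a - b) = piF a - piF b.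
Proof. by apply/ffunP => K; rewrite !ffunE; case: ifP; rewrite ?subr0. Qed.
Lemma pi0 : piF 0 = 0 :> chain.
Proof. by apply/ffunP => K; rewrite !ffunE; case: ifP. Qed.
Lemma pi_sum I (r : seq I) P (F : I -> chain) :
  piF (\sum_(i <- r | P i) F i) = \sum_(i <- r | P i) piF (F i).
Proof. exact: (big_morph _ piD pi0). Qed.

Lemma minP_None_all (P : pred Idx) : minP P = None -> forall j, ~~ P j.
Proof.
move=> h j; apply/negP => Pj; have [j0 [P0 M0]] := minP_ex Pj.
by rewrite (minP_some P0 M0) in h.
Qed.

Lemma supp_Hb (K : key) (m : mon) : supp (fun K' : key => [&& #|K.1| <= #|K'.1|,
   #|K'.1| + #|K'.2| == (#|K.1| + #|K.2|).+1 & (K.2 != set0) ==> (K'.1 == K.1)])%N (Hb K m).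
Proof.
rewrite /Hb; case hW: minP => [j|].
  case: ifP => jB; first exact: supp0.
  by apply: supp_single => /=; rewrite leqnn cardsU1 jB eqxx implybT /= add1n addnS eqxx.
have nW := minP_None_all hW.
have B0 : K.2 = set0.
  by apply/setP => j; rewrite inE; have := nW j; rewrite /Wact; case: (j \in K.2).
case: minP => [i|]; last exact: supp0.
case: ifP => iA; first exact: supp0.
by apply: supp_single => /=; rewrite B0 eqxx cardsU1 iA /= add1n leqnSn addSn eqxx.
Qed.

Lemma GE (x : chain) : supp (fun K : key => 2 <= #|K.1|)%N x -> D (H x) + H (D x) = x.
Proof.
move=> sx; rewrite [in LHS](chain_decomp x) [in RHS](chain_decomp x) H_sum D_sum D_sum H_sum -big_split /=.
apply: eq_bigr => K _.
case: (eqVneq (x K) 0) => [->|nz]; first by rewrite single0 H0 D0 H0 addr0.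
have hK := sx K nz.
rewrite (mpolyE (x K)) !single_sum H_sum D_sum D_sum H_sum -big_split /=.
apply: eq_bigr => m _; rewrite singleZ HZ DZ DZ HZ -scalerDr; apply: f_equal.
rewrite H_single /Hs extX; case: K hK {nz} => A B hK; exact: core.
Qed.


Lemma dF_pi (x : chain) : supp (fun K : key => 2 <= #|K.1|)%N x -> dF x = piF (D x).
Proof.
move=> sx; rewrite /dF /D pi_sum; apply: eq_bigr => K _.
case: (eqVneq (x K) 0) => [->|nz]; first by rewrite dh0 dv0 dhF0 add0r pi0.
have hK := sx K nz.
rewrite piD [piF (dv _ _ _)]pi_id; last first.
  rewrite /dv; apply: suppZ; apply: supp_sum => j _; exact: supp_single.
congr (_ + _).
rewrite /dh /dhF; case: ifP => h3.
  rewrite pi_id //; apply: supp_sum => i iA; apply: supp_single => /=.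
  by move: h3; rewrite (cardsD1 i K.1) iA /=; lia.
rewrite pi_0 //; apply: supp_sum => i iA; apply: supp_single => /=.
by move: h3 hK; rewrite (cardsD1 i K.1) iA /=; lia.
Qed.

Lemma suppDx (x : chain) (i : int) : inF i x -> i != 0 ->
  supp (fun K : key => (2 <= #|K.1|)%N || (K.2 != set0)) (D x).
Proof.
move=> hx hi; rewrite /D; apply: supp_sum => K _.
case: (eqVneq (x K) 0) => [->|nz]; first by rewrite dhF0 dv0 addr0; exact: supp0.
have [h2 hsum] := hx K nz.
apply: suppD.
  rewrite /dhF; apply: supp_sum => j jA; apply: supp_single => /=.
  case: (eqVneq K.2 set0) => [B0|]; rewrite ?orbT // orbF.
  by move: hsum hi h2; rewrite B0 cards0 addn0 (cardsD1 j K.1) jA /= => e /eqP ne; lia.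
by rewrite /dv; apply: suppZ; apply: supp_sum => j _; apply: supp_single => /=; rewrite h2.
Qed.

End Work4.

Unset Implicit Arguments.
Set Strict Implicit.
Theorem proposition7p6 (k : fieldType) (p : nat) (hp : (3 <= p)%N)
  (i : int) (hi : i != 0) (x : chain k p) :
  inF i x -> dF x = 0 -> exists2 y : chain k p, inF (i + 1) y & dF y = x.
Proof.
move=> hx dx.
have sx : supp (fun K : key p => 2 <= #|K.1|)%N x by move=> K /hx [].
set y := H x.
have sy : supp (fun K : key p => (2 <= #|K.1|)%N && ((#|K.1| + #|K.2|)%N%:Z == i + 1 + 2)) y.
  rewrite /y /H; apply: supp_sum => K _.
  case: (eqVneq (x K) 0) => [->|nz]; first by rewrite /Hs ext0; exact: supp0.
  have [h2 hsum] := hx K nz.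
  apply: supp_ext => m; apply: (@supp_impl k p _ _ _ (@supp_Hb k p K m)) => K' /and3P[h1 /eqP h3 _].
  apply/andP; split; first lia.
  by apply/eqP; rewrite h3; move: hsum; lia.
exists y.
  by move=> K /sy /andP[h1 /eqP h2].
rewrite (dF_pi (supp_impl sy _)); last by move=> K /andP[].
have eD : D y = x - H (D x) by rewrite /y; apply: (canRL (addrK (H (D x)))); exact: GE sx.
rewrite eD piB (pi_id sx).
have eDx : D x = D x - piK (D x) by rewrite -(dF_pi sx) dx subr0.
rewrite eDx.
set z := D x - piK (D x).
have sz : supp (fun K : key p => (#|K.1| < 2)%N && (K.2 != set0)) z.
  move=> K; rewrite /z !ffunE; case: ifP => h2; first by rewrite subrr eqxx.
  rewrite subr0 => nz; have := suppDx hx hi nz; rewrite h2 /= => ->.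
  by rewrite andbT ltnNge h2.
rewrite pi_0 ?subr0 //.
rewrite /H; apply: supp_sum => K _; case: (eqVneq (z K) 0) => [->|nz].
  by rewrite /Hs ext0; exact: supp0.
have /andP[h1 h2] := sz K nz.
apply: supp_ext => m; apply: (@supp_impl k p _ _ _ (@supp_Hb k p K m)) => K' /and3P[_ _].
by rewrite h2 /= => /eqP ->.
Qed.
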